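(* Let $p$ be an odd prime, $l\ge 2$ an integer, and $d$ a positive integer with $p\nmid d$. Then the arithmetic progression $p^l+6dn$, $n=0,1,2,\ldots$, contains no $p$ consecutive terms $p^l+6dn,\,p^l+6d(n+1),\ldots,p^l+6d(n+p-1)$ that are all prime; i.e. it contains no $p$-tuple of primes. *)

(* Defs.v *)
From mathcomp Require Import all_boot.

(* Main.v *)
Require Import Defs.
From mathcomp Require Import all_boot.

Theorem corollary3p5 (p l d : nat) :
  prime p -> odd p -> 2 <= l -> 0 < d -> ~~ (p %| d) ->
  forall n : nat, ~ (forall k : nat, k < p -> prime (p ^ l + 6 * d * (n + k))).
Proof.
move=> pp _ l2 _ _ n H.
have p0 : 0 < p by rewrite prime_gt0.
set k := (p - n %% p) %% p.
have kp : k < p by rewrite ltn_pmod.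
have dv : p %| n + k.
  rewrite /dvdn /k modnDmr {1}(divn_eq n p) -addnA subnKC; last by rewrite ltnW // ltn_pmod.
  by rewrite -mulSnr modnMl.
have T := H k kp.
have dT : p %| p ^ l + 6 * d * (n + k).
  rewrite dvdn_add //; last by rewrite dvdn_mull.
  by rewrite dvdn_exp // (leq_trans _ l2).
move: dT; rewrite dvdn_prime2 // => /eqP E.
have p1 : 1 < p by rewrite prime_gt1.
have h2 : p ^ 2 <= p ^ l by rewrite leq_pexp2l.
have h1 : p < p ^ 2 by rewrite expnS expn1 ltn_Pmull.
have h3 : p ^ l <= p ^ l + 6 * d * (n + k) by apply: leq_addr.
have := leq_trans h1 (leq_trans h2 h3).
by rewrite -E ltnn.
Qed.
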